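(* Let $X$ be a real Hilbert space, $I$ a finite index set, and $(T_i)_{i\in I}$ a family of operators $X\to X$ such that each $T_i$ is averaged nonexpansive and boundedly linearly regular. Set $Z_i=\operatorname{Fix}T_i$ and suppose $Z=\bigcap_{i\in I}Z_i\neq\varnothing$ and that the family $(Z_i)_{i\in I}$ is boundedly linearly regular. Let $(\omega_{i,n})_{(i,n)\in I\times\mathbb N}$ satisfy $\omega_{i,n}\in[0,1]$ and $\sum_{i\in I}\omega_{i,n}=1$ for every $n\in\mathbb N$. Set $I_n=\{i\in I:\omega_{i,n}>0\}$ and suppose $\omega_+=\inf_{n\in\mathbb N}\min_{i\in I_n}\omega_{i,n}>0$. Suppose there is $p\in\{1,2,\dots\}$ such that $I_n\cup I_{n+1}\cup\cdots\cup I_{n+p-1}=I$ for all $n\in\mathbb N$. Let $x_0\in X$ and define $x_{n+1}=\sum_{i\in I}\omega_{i,n}T_ix_n$. Then $(x_n)_{n\in\mathbb N}$ converges linearly to some point of $Z$.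
   Context: $T\colon X\to X$ is averaged nonexpansive if $T=(1-\lambda)\mathrm{Id}+\lambda N$ for some $\lambda\in[0,1[$ and some nonexpansive $N\colon X\to X$. An operator $T$ with $\operatorname{Fix}T\neq\varnothing$ is boundedly linearly regular if for every $\rho>0$ there is $\kappa\ge0$ with $d_{\operatorname{Fix}T}(x)\le\kappa\|x-Tx\|$ for all $x$ with $\|x\|\le\rho$. A finite family $(C_i)_{i\in I}$ of closed convex sets with $C=\bigcap_i C_i\ne\varnothing$ is boundedly linearly regular if for every $\rho>0$ there is $\mu>0$ with $d_C(x)\le\mu\max_{i\in I}d_{C_i}(x)$ for all $\|x\|\le\rho$. Here $d_C$ denotes the distance function to $C$. A sequence $(x_n)$ converges linearly to $\bar x$ if there are $c\ge0$ and $q\in[0,1[$ with $\|x_n-\bar x\|\le cq^n$ for all $n$. *)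

(* Defs.v *)
From Stdlib Require Import Reals Lra Lia ClassicalEpsilon.
Open Scope R_scope.

Record Hilbert := {
  hcar :> Type;
  hzero : hcar;
  hadd : hcar -> hcar -> hcar;
  hopp : hcar -> hcar;
  hscal : R -> hcar -> hcar;
  hinner : hcar -> hcar -> R;
  hadd_assoc : forall x y z, hadd x (hadd y z) = hadd (hadd x y) z;
  hadd_comm : forall x y, hadd x y = hadd y x;
  hadd_zero : forall x, hadd x hzero = x;
  hadd_opp : forall x, hadd x (hopp x) = hzero;
  hscal_one : forall x, hscal 1 x = x;
  hscal_assoc : forall a b x, hscal a (hscal b x) = hscal (a * b) x;
  hscal_distr_l : forall a x y, hscal a (hadd x y) = hadd (hscal a x) (hscal a y);
  hscal_distr_r : forall a b x, hscal (a + b) x = hadd (hscal a x) (hscal b x);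
  hinner_sym : forall x y, hinner x y = hinner y x;
  hinner_add_l : forall x y z, hinner (hadd x y) z = hinner x z + hinner y z;
  hinner_scal_l : forall a x y, hinner (hscal a x) y = a * hinner x y;
  hinner_pos : forall x, 0 <= hinner x x;
  hinner_def : forall x, hinner x x = 0 -> x = hzero;
  hcomplete : forall u : nat -> hcar,
    (forall eps, eps > 0 -> exists N, forall m n, (m >= N)%nat -> (n >= N)%nat ->
        sqrt (hinner (hadd (u m) (hopp (u n))) (hadd (u m) (hopp (u n)))) < eps) ->
    exists l, forall eps, eps > 0 -> exists N, forall n, (n >= N)%nat ->
        sqrt (hinner (hadd (u n) (hopp l)) (hadd (u n) (hopp l))) < eps
}.

Section Ops.
Variable X : Hilbert.

Definition hsub (x y : X) : X := hadd X x (hopp X y).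
Definition hnorm (x : X) : R := sqrt (hinner X x x).

Definition Fix (T : X -> X) : X -> Prop := fun x => T x = x.

Definition nonexpansive (N : X -> X) : Prop :=
  forall x y, hnorm (hsub (N x) (N y)) <= hnorm (hsub x y).

Definition averaged_nonexpansive (T : X -> X) : Prop :=
  exists (lam : R) (N : X -> X), 0 <= lam < 1 /\ nonexpansive N /\
    forall x, T x = hadd X (hscal X (1 - lam) x) (hscal X lam (N x)).

(** Distance function d_C(x) = inf { ||x - c|| : c in C }
    (chosen via epsilon; it is the infimum whenever C is nonempty). *)
Definition dist (C : X -> Prop) (x : X) : R :=
  epsilon (inhabits 0)
    (fun d => (forall c, C c -> d <= hnorm (hsub x c)) /\
              (forall e, (forall c, C c -> e <= hnorm (hsub x c)) -> e <= d)).

Definition bdd_lin_regular_op (T : X -> X) : Prop :=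
  (exists z, Fix T z) /\
  forall rho, rho > 0 -> exists kappa, kappa >= 0 /\
    forall x, hnorm x <= rho -> dist (Fix T) x <= kappa * hnorm (hsub x (T x)).

(** Finite index set I = {0, ..., m-1}. *)
Definition inter_fam (m : nat) (C : nat -> X -> Prop) : X -> Prop :=
  fun x => forall i, (i < m)%nat -> C i x.

(** max_{i < m} f i  (with value 0 for m = 0; used on nonnegative f). *)
Fixpoint max_fin (m : nat) (f : nat -> R) : R :=
  match m with
  | O => 0
  | S k => Rmax (max_fin k f) (f k)
  end.

Definition bdd_lin_regular_fam (m : nat) (C : nat -> X -> Prop) : Prop :=
  forall rho, rho > 0 -> exists mu, mu > 0 /\
    forall x, hnorm x <= rho ->
      dist (inter_fam m C) x <= mu * max_fin m (fun i => dist (C i) x).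

Fixpoint vsum (m : nat) (f : nat -> X) : X :=
  match m with
  | O => hzero X
  | S k => hadd X (vsum k f) (f k)
  end.

Fixpoint rsum (m : nat) (f : nat -> R) : R :=
  match m with
  | O => 0
  | S k => rsum k f + f k
  end.

End Ops.

Arguments hsub {X}. Arguments hnorm {X}. Arguments Fix {X}.
Arguments nonexpansive {X}. Arguments averaged_nonexpansive {X}.
Arguments dist {X}. Arguments bdd_lin_regular_op {X}.
Arguments inter_fam {X}. Arguments bdd_lin_regular_fam {X}.
Arguments vsum {X}.

(* Main.v *)
Require Import Defs.
From Stdlib Require Import Reals.
Open Scope R_scope.
From Stdlib Require Import Lra Lia Psatz ClassicalEpsilon Classical Arith.
Local Notation dist := Defs.dist.

Section Alg.
Variable X : Hilbert.
Local Notation add := (hadd X).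
Local Notation opp := (hopp X).
Local Notation scal := (hscal X).
Local Notation inner := (hinner X).
Local Notation zero := (hzero X).

Lemma inner_zero_l (y : X) : inner zero y = 0.
Proof.
  assert (H : inner (add zero zero) y = inner zero y) by (rewrite hadd_zero; reflexivity).
  rewrite hinner_add_l in H. lra.
Qed.

Lemma inner_opp_l (x y : X) : inner (opp x) y = - inner x y.
Proof.
  assert (H : inner (add x (opp x)) y = 0) by (rewrite hadd_opp; apply inner_zero_l).
  rewrite hinner_add_l in H. lra.
Qed.

Lemma inner_add_r (x y z : X) : inner x (add y z) = inner x y + inner x z.
Proof. rewrite hinner_sym, hinner_add_l, (hinner_sym X y), (hinner_sym X z); reflexivity. Qed.
Lemma inner_scal_r a (x y : X) : inner x (scal a y) = a * inner x y.
Proof. rewrite hinner_sym, hinner_scal_l, (hinner_sym X y); reflexivity. Qed.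
Lemma inner_opp_r (x y : X) : inner x (opp y) = - inner x y.
Proof. rewrite hinner_sym, inner_opp_l, (hinner_sym X y); reflexivity. Qed.
Lemma inner_zero_r (x : X) : inner x zero = 0.
Proof. rewrite hinner_sym; apply inner_zero_l. Qed.

Lemma heq_w (a b : X) : (forall w, inner a w = inner b w) -> a = b.
Proof.
  intros H.
  assert (Hd : add a (opp b) = zero).
  { apply hinner_def. rewrite hinner_add_l, inner_opp_l, !H. ring. }
  rewrite <- (hadd_zero X a), <- (hadd_opp X b), hadd_assoc, (hadd_comm X a b),
     <- hadd_assoc, Hd, hadd_zero. reflexivity.
Qed.

Ltac vexp := apply heq_w; intro w; unfold hsub;
  repeat rewrite ?hinner_add_l, ?hinner_scal_l, ?inner_opp_l, ?inner_zero_l; ring.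

Lemma hsub_vsum (m : nat) (om : nat -> R) (v : nat -> X) (z : X) :
  hsub (vsum m (fun i => scal (om i) (v i))) (scal (rsum m om) z) =
  vsum m (fun i => scal (om i) (hsub (v i) z)).
Proof.
  induction m as [|k IH]; cbn [vsum rsum].
  - vexp.
  - rewrite <- IH. vexp.
Qed.

Definition nsq (v : X) := inner v v.

Lemma hnorm_nonneg (v : X) : 0 <= hnorm v.
Proof. apply sqrt_pos. Qed.

Lemma hnorm_sq (v : X) : hnorm v * hnorm v = inner v v.
Proof. unfold hnorm. apply sqrt_sqrt, hinner_pos. Qed.

Lemma hnorm_zero : hnorm zero = 0.
Proof. unfold hnorm. rewrite inner_zero_l. apply sqrt_0. Qed.

Lemma hnorm_scal a (v : X) : hnorm (scal a v) = Rabs a * hnorm v.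
Proof.
  apply Rsqr_inj.
  - apply hnorm_nonneg.
  - apply Rmult_le_pos; [apply Rabs_pos|apply hnorm_nonneg].
  - unfold Rsqr. replace (Rabs a * hnorm v * (Rabs a * hnorm v))
      with ((Rabs a * Rabs a) * (hnorm v * hnorm v)) by ring.
    rewrite <- Rabs_mult. rewrite (Rabs_right (a*a)) by (apply Rle_ge; nra). rewrite !hnorm_sq.
    rewrite hinner_scal_l, inner_scal_r. ring.
Qed.

Lemma cauchy_schwarz (x y : X) : inner x y <= hnorm x * hnorm y.
Proof.
  destruct (Req_dec (inner y y) 0) as [H0|H0].
  - apply hinner_def in H0. subst y. rewrite inner_zero_r.
    apply Rmult_le_pos; apply hnorm_nonneg.
  - assert (Hc : 0 < inner y y) by (pose proof (hinner_pos X y); lra).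
    set (t := - inner x y / inner y y).
    pose proof (hinner_pos X (add x (scal t y))) as Hp.
    rewrite hinner_add_l, !inner_add_r, !hinner_scal_l, !inner_scal_r in Hp.
    rewrite (hinner_sym X y x) in Hp.
    assert (Hb : inner x y * inner x y <= inner x x * inner y y).
    { unfold t in Hp. field_simplify in Hp; [|lra].
      apply Rmult_le_compat_r with (r := inner y y) in Hp; [|lra].
      unfold Rdiv in Hp. rewrite Rmult_assoc, Rinv_l, Rmult_1_r in Hp by lra.
      nra. }
    rewrite <- (hnorm_sq x), <- (hnorm_sq y) in Hb.
    pose proof (hnorm_nonneg x); pose proof (hnorm_nonneg y).
    set (b := inner x y) in *. set (p := hnorm x * hnorm y).
    assert (0 <= p) by (apply Rmult_le_pos; assumption).
    destruct (Rle_dec b p) as [|Hn]; [assumption|]. exfalso.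
    assert (p * p < b * b) by (apply Rmult_le_0_lt_compat; lra).
    unfold p in H3. clear Hp t. clearbody b p. lra.
Qed.

Lemma hnorm_tri (x y : X) : hnorm (add x y) <= hnorm x + hnorm y.
Proof.
  pose proof (hnorm_sq (add x y)) as H.
  rewrite hinner_add_l, !inner_add_r, (hinner_sym X y x) in H.
  rewrite <- (hnorm_sq x), <- (hnorm_sq y) in H.
  pose proof (cauchy_schwarz x y).
  pose proof (hnorm_nonneg x); pose proof (hnorm_nonneg y); pose proof (hnorm_nonneg (add x y)).
  nra.
Qed.

Lemma hnorm_sub_sym (a b : X) : hnorm (hsub a b) = hnorm (hsub b a).
Proof.
  replace (hsub b a) with (scal (-1) (hsub a b)) by vexp.
  rewrite hnorm_scal. replace (Rabs (-1)) with 1 by (rewrite Rabs_left; lra). ring.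
Qed.

Lemma hnorm_tri_sub (a b c : X) : hnorm (hsub a c) <= hnorm (hsub a b) + hnorm (hsub b c).
Proof.
  replace (hsub a c) with (add (hsub a b) (hsub b c)) by vexp. apply hnorm_tri.
Qed.

Lemma hnorm_le_sub (a z : X) : hnorm a <= hnorm (hsub a z) + hnorm z.
Proof.
  replace a with (add (hsub a z) z) at 1 by vexp. apply hnorm_tri.
Qed.

Lemma hnorm_eq0 (a b : X) : hnorm (hsub a b) = 0 -> a = b.
Proof.
  intro H. unfold hnorm in H. apply sqrt_eq_0 in H; [|apply hinner_pos].
  apply hinner_def in H. apply heq_w. intro w.
  assert (inner (hsub a b) w = 0) by (rewrite H; apply inner_zero_l).
  unfold hsub in H0. rewrite hinner_add_l, inner_opp_l in H0. lra.
Qed.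

Lemma norm_vsum (m : nat) (f : nat -> X) :
  hnorm (vsum m f) <= rsum m (fun i => hnorm (f i)).
Proof.
  induction m as [|k IH]; cbn [vsum rsum].
  - rewrite hnorm_zero. lra.
  - eapply Rle_trans; [apply hnorm_tri|]. lra.
Qed.

Lemma averaged_ineq (T : X -> X) : averaged_nonexpansive T ->
  exists c, c > 0 /\ forall x z, T z = z ->
    nsq (hsub (T x) z) <= nsq (hsub x z) - c * nsq (hsub x (T x)).
Proof.
  intros [l [N [Hl [HN HT]]]]. exists (1 - l). split; [lra|].
  intros x z Hz.
  set (u := hsub x z). set (v := hsub (N x) z).
  assert (E1 : hsub (T x) z = add (scal (1-l) u) (scal l v)) by (unfold u, v; rewrite HT; vexp).
  assert (E2 : hsub x (T x) = scal l (add u (opp v))) by (unfold u, v; rewrite HT; vexp).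
  assert (HVU : l * inner v v <= l * inner u u).
  { destruct (Req_dec l 0) as [->|Hl0]; [lra|].
    assert (HNz : N z = z).
    { apply heq_w. intro w.
      assert (H1 : inner (T z) w = inner z w) by (rewrite Hz; reflexivity).
      rewrite HT, hinner_add_l, !hinner_scal_l in H1.
      assert (H0 : l * (inner (N z) w - inner z w) = 0) by lra.
      apply Rmult_integral in H0. lra. }
    pose proof (HN x z) as Hne. rewrite HNz in Hne.
    fold v in Hne. fold u in Hne.
    pose proof (hnorm_nonneg v). pose proof (hnorm_nonneg u).
    rewrite <- (hnorm_sq v), <- (hnorm_sq u).
    apply Rmult_le_compat_l; [lra|]. nra. }
  unfold nsq. rewrite E1, E2. fold u.
  pose proof (hinner_pos X (add u (opp v))) as HW.
  repeat rewrite ?hinner_add_l, ?inner_add_r, ?hinner_scal_l, ?inner_scal_r, ?inner_opp_l, ?inner_opp_r.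
  repeat rewrite ?hinner_add_l, ?inner_add_r, ?inner_opp_l, ?inner_opp_r in HW.
  rewrite (hinner_sym X v u).
  set (U := inner u u) in *. set (V := inner v v) in *. set (B := inner u v) in *.
  rewrite (hinner_sym X v u) in HW. fold B in HW.
  assert (0 <= l * (1-l) * (1-l) * (U - B + - (B - V))).
  { repeat apply Rmult_le_pos; lra. }
  clearbody U V B. clear E1 E2. nra.
Qed.

End Alg.

Lemma nsq_hnorm_le (X : Hilbert) (a b : X) : nsq X a <= nsq X b -> hnorm a <= hnorm b.
Proof. intros H. unfold hnorm. apply sqrt_le_1_alt. exact H. Qed.

Lemma hnorm_self (X : Hilbert) (a : X) : hnorm (hsub a a) = 0.
Proof.
  unfold hsub. rewrite hadd_opp. apply hnorm_zero.
Qed.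

Lemma nsq_nonneg (X : Hilbert) (a : X) : 0 <= nsq X a.
Proof. apply hinner_pos. Qed.

Lemma avg_family (X : Hilbert) (m : nat) (T : nat -> X -> X) :
  (forall i, (i < m)%nat -> averaged_nonexpansive (T i)) ->
  exists c, c > 0 /\ forall i, (i < m)%nat -> forall y z, T i z = z ->
    nsq X (hsub (T i y) z) <= nsq X (hsub y z) - c * nsq X (hsub y (T i y)).
Proof.
  induction m as [|k IH]; intros H.
  - exists 1. split; [lra|]. intros; exfalso; inversion H0.
  - destruct IH as [c1 [Hc1 H1]]; [intros; apply H; auto|].
    destruct (averaged_ineq X (T k) (H k (Nat.lt_succ_diag_r k))) as [c2 [Hc2 H2]].
    exists (Rmin c1 c2). split; [apply Rmin_pos; lra|].
    intros i Hi y z Hz. pose proof (nsq_nonneg X (hsub y (T i y))) as Hn.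
    assert (Rmin c1 c2 * nsq X (hsub y (T i y)) <= c1 * nsq X (hsub y (T i y)))
      by (apply Rmult_le_compat_r; [lra|apply Rmin_l]).
    assert (Rmin c1 c2 * nsq X (hsub y (T i y)) <= c2 * nsq X (hsub y (T i y)))
      by (apply Rmult_le_compat_r; [lra|apply Rmin_r]).
    destruct (Nat.eq_dec i k) as [->|Hne].
    + specialize (H2 y z Hz). lra.
    + specialize (H1 i ltac:(lia) y z Hz). lra.
Qed.


Section Dist.
Variable X : Hilbert.

Lemma dist_spec (C : X -> Prop) (x : X) : (exists c, C c) ->
  (forall c, C c -> dist C x <= hnorm (hsub x c)) /\
  (forall e, (forall c, C c -> e <= hnorm (hsub x c)) -> e <= dist C x).
Proof.
  intros [c0 Hc0]. unfold dist. apply epsilon_spec.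
  set (E := fun y => exists c, C c /\ y = - hnorm (hsub x c)).
  assert (Hb : bound E).
  { exists 0. intros y [c [_ ->]]. pose proof (hnorm_nonneg X (hsub x c)). lra. }
  assert (He : exists y, E y) by (exists (- hnorm (hsub x c0)); exists c0; auto).
  destruct (completeness E Hb He) as [l [Hub Hlub]].
  exists (- l). split.
  - intros c Hc. assert (- hnorm (hsub x c) <= l) by (apply Hub; exists c; auto). lra.
  - intros e He'. assert (l <= - e).
    { apply Hlub. intros y [c [Hc ->]]. specialize (He' c Hc). lra. }
    lra.
Qed.

Lemma dist_le (C : X -> Prop) x c : C c -> dist C x <= hnorm (hsub x c).
Proof. intro H. apply (proj1 (dist_spec C x (ex_intro _ c H))). assumption. Qed.

Lemma dist_glb (C : X -> Prop) x e : (exists c, C c) ->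
  (forall c, C c -> e <= hnorm (hsub x c)) -> e <= dist C x.
Proof. intros H. apply (proj2 (dist_spec C x H)). Qed.

Lemma dist_nonneg (C : X -> Prop) x : (exists c, C c) -> 0 <= dist C x.
Proof. intros H. apply dist_glb; auto. intros; apply hnorm_nonneg. Qed.

Lemma dist_approx (C : X -> Prop) x eps : (exists c, C c) -> eps > 0 ->
  exists c, C c /\ hnorm (hsub x c) < dist C x + eps.
Proof.
  intros H He. apply NNPP. intro Hn.
  assert (dist C x + eps <= dist C x).
  { apply dist_glb; auto. intros c Hc. apply Rnot_lt_le. intro Hl. apply Hn. eauto. }
  lra.
Qed.

Lemma dist_lip (C : X -> Prop) x y : (exists c, C c) ->
  dist C y <= hnorm (hsub y x) + dist C x.
Proof.
  intros H.
  assert (dist C y - hnorm (hsub y x) <= dist C x).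
  { apply dist_glb; auto. intros c Hc.
    pose proof (dist_le C y c Hc). pose proof (hnorm_tri_sub X y x c). lra. }
  lra.
Qed.

End Dist.

Lemma sq_nonneg (x : R) : 0 <= x * x.
Proof. nra. Qed.

Lemma rsum_le m f g : (forall i, (i < m)%nat -> f i <= g i) -> rsum m f <= rsum m g.
Proof.
  induction m; intros H; cbn [rsum]; [lra|].
  assert (rsum m f <= rsum m g) by (apply IHm; intros; apply H; lia).
  specialize (H m ltac:(lia)). lra.
Qed.

Lemma rsum_nonneg m f : (forall i, (i < m)%nat -> 0 <= f i) -> 0 <= rsum m f.
Proof.
  intros H. replace 0 with (rsum m (fun _ => 0)).
  - apply rsum_le; auto.
  - induction m; cbn [rsum]; [reflexivity|]. rewrite IHm; [ring|intros; apply H; lia].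
Qed.

Lemma rsum_ext m f g : (forall i, (i < m)%nat -> f i = g i) -> rsum m f = rsum m g.
Proof.
  induction m; intros H; cbn [rsum]; [reflexivity|].
  rewrite IHm by (intros; apply H; lia). rewrite H by lia. reflexivity.
Qed.

Lemma rsum_lin m a b f g :
  rsum m (fun i => a * f i + b * g i) = a * rsum m f + b * rsum m g.
Proof. induction m; cbn [rsum]; [ring|]. rewrite IHm. ring. Qed.

Lemma rsum_term m f i : (forall j, (j < m)%nat -> 0 <= f j) -> (i < m)%nat ->
  f i <= rsum m f.
Proof.
  induction m; intros H Hi; [lia|]. cbn [rsum].
  assert (0 <= rsum m f) by (apply rsum_nonneg; intros; apply H; lia).
  destruct (Nat.eq_dec i m) as [->|Hne].
  - lra.
  - assert (f i <= rsum m f) by (apply IHm; [intros; apply H; lia|lia]).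
    specialize (H m ltac:(lia)). lra.
Qed.

Lemma rsum_mono_len k p f : (k <= p)%nat -> (forall j, (j < p)%nat -> 0 <= f j) ->
  rsum k f <= rsum p f.
Proof.
  intros Hk H. induction p.
  - replace k with 0%nat by lia. lra.
  - destruct (Nat.eq_dec k (S p)) as [->|Hne]; [lra|].
    cbn [rsum]. assert (rsum k f <= rsum p f) by (apply IHp; [lia|intros; apply H; lia]).
    specialize (H p ltac:(lia)). lra.
Qed.

Lemma rsum_CS m w a : (forall i, (i < m)%nat -> 0 <= w i) ->
  rsum m (fun i => w i * a i) * rsum m (fun i => w i * a i) <=
  rsum m w * rsum m (fun i => w i * (a i * a i)).
Proof.
  induction m; intros H; cbn [rsum]; [lra|].
  assert (IH := IHm ltac:(intros; apply H; lia)).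
  assert (HW : 0 <= rsum m w) by (apply rsum_nonneg; intros; apply H; lia).
  assert (HB : 0 <= rsum m (fun i => w i * (a i * a i))).
  { apply rsum_nonneg; intros. apply Rmult_le_pos; [apply H; lia|nra]. }
  assert (Hw := H m ltac:(lia)).
  set (A := rsum m (fun i => w i * a i)) in *.
  set (W := rsum m w) in *. set (B := rsum m (fun i => w i * (a i * a i))) in *.
  set (wm := w m) in *. set (am := a m).
  clearbody A W B wm am.
  assert (Hk : 2 * am * A <= W * (am * am) + B).
  { destruct (Req_dec W 0) as [->|HW0].
    - assert (A = 0) by nra. subst A. nra.
    - assert (0 < W) by lra.
      assert (W * (2 * am * A) <= W * (W * (am * am) + B)).
      { pose proof (sq_nonneg (W * am - A)). lra. }
      apply Rmult_le_reg_l with W; lra. }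
  nra.
Qed.

Lemma rsum_telescope p (f : nat -> R) :
  rsum p (fun k => f k - f (S k)) = f 0%nat - f p.
Proof. induction p; cbn [rsum]; [ring|]. rewrite IHp. ring. Qed.

Lemma rsum_const p c : rsum p (fun _ => c) = INR p * c.
Proof. induction p; cbn [rsum]; [simpl; ring|]. rewrite IHp. rewrite S_INR. ring. Qed.

Lemma max_fin_le m f B : 0 <= B -> (forall i, (i < m)%nat -> f i <= B) -> max_fin m f <= B.
Proof.
  induction m; intros HB H; simpl; [lra|].
  apply Rmax_lub; [apply IHm; auto|apply H; lia].
Qed.

Lemma bernoulli t n : 0 <= t <= 1 -> 1 - INR n * t <= (1 - t) ^ n.
Proof.
  intros Ht. induction n; [simpl; lra|].
  rewrite S_INR. cbn [pow]. pose proof (pos_INR n).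
  assert (0 <= (1 - t) ^ n) by (apply pow_le; lra).
  assert (0 <= INR n * t * t) by (apply Rmult_le_pos; [apply Rmult_le_pos|]; lra).
  assert ((1 - t) * (1 - INR n * t) <= (1 - t) * (1 - t) ^ n) by (apply Rmult_le_compat_l; lra).
  lra.
Qed.

Lemma eps_sq_lemma a d r : 0 <= d -> (forall eps, eps > 0 -> a <= (d + eps) * (d + eps) - r) ->
  a <= d * d - r.
Proof.
  intros Hd H. apply Rnot_lt_le. intro Hl.
  set (g := a - (d * d - r)).
  assert (Hg : 0 < g) by (unfold g; lra).
  set (e := Rmin 1 (g / (2 * d + 2))).
  assert (He : 0 < e) by (unfold e; apply Rmin_pos; [lra|apply Rdiv_lt_0_compat; lra]).
  assert (He1 : e <= 1) by apply Rmin_l.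
  assert (He2 : e <= g / (2 * d + 2)) by apply Rmin_r.
  assert (He3 : e * (2 * d + 2) <= g).
  { apply Rmult_le_compat_r with (r := 2 * d + 2) in He2; [|lra].
    unfold Rdiv in He2. rewrite Rmult_assoc, Rinv_l, Rmult_1_r in He2; lra. }
  specialize (H e He). assert (Hgd : g = a - (d * d - r)) by reflexivity.
  clearbody e g. assert (e * e <= e * 1) by (apply Rmult_le_compat_l; lra).
  assert (e * d >= 0) by nra. lra.
Qed.

Lemma eps_lin_lemma a d : (forall eps, eps > 0 -> a <= d + eps) -> a <= d.
Proof.
  intros H. apply Rnot_lt_le. intro Hl.
  specialize (H ((a - d)/2) ltac:(lra)). lra.
Qed.


Lemma rsum_scal m c f : rsum m (fun i => c * f i) = c * rsum m f.
Proof. induction m; cbn [rsum]; [ring|]. rewrite IHm. ring. Qed.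

Section Main.
Variables (X : Hilbert) (m : nat) (T : nat -> X -> X) (omega : nat -> nat -> R) (x : nat -> X).
Hypothesis Hom01 : forall i n, (i < m)%nat -> 0 <= omega i n <= 1.
Hypothesis Hsum : forall n, rsum m (fun i => omega i n) = 1.
Hypothesis Hx : forall n, x (S n) = vsum m (fun i => hscal X (omega i n) (T i (x n))).
Variable c0 : R.
Hypothesis Hc0 : c0 > 0.
Hypothesis Hc0T : forall i, (i < m)%nat -> forall y z, T i z = z ->
    nsq X (hsub (T i y) z) <= nsq X (hsub y z) - c0 * nsq X (hsub y (T i y)).

Definition bb i j := hnorm (hsub (x j) (T i (x j))).
Definition DD j := rsum m (fun i => omega i j * bb i j).
Definition SS j := rsum m (fun i => omega i j * (bb i j * bb i j)).
Definition ZZ := inter_fam m (fun i => Fix (T i)).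

Lemma x_sub z n : hsub (x (S n)) z = vsum m (fun i => hscal X (omega i n) (hsub (T i (x n)) z)).
Proof. rewrite Hx, <- hsub_vsum, Hsum, hscal_one. reflexivity. Qed.

Lemma bb_nonneg i j : 0 <= bb i j.
Proof. apply hnorm_nonneg. Qed.

Lemma DD_nonneg j : 0 <= DD j.
Proof. apply rsum_nonneg. intros. apply Rmult_le_pos; [apply Hom01; auto|apply bb_nonneg]. Qed.

Lemma SS_nonneg j : 0 <= SS j.
Proof.
  apply rsum_nonneg. intros. apply Rmult_le_pos; [apply Hom01; auto|apply sq_nonneg].
Qed.

Lemma norm_wsum n (f : nat -> X) :
  hnorm (vsum m (fun i => hscal X (omega i n) (f i))) <=
  rsum m (fun i => omega i n * hnorm (f i)).
Proof.
  eapply Rle_trans; [apply norm_vsum|]. apply rsum_le. intros i Hi.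
  rewrite hnorm_scal, Rabs_right; [lra|]. apply Rle_ge, Hom01; auto.
Qed.

Lemma fejer z n : ZZ z -> nsq X (hsub (x (S n)) z) <= nsq X (hsub (x n) z) - c0 * SS n.
Proof.
  intros Hz.
  set (a := fun i => hnorm (hsub (T i (x n)) z)).
  assert (H1 : hnorm (hsub (x (S n)) z) <= rsum m (fun i => omega i n * a i)).
  { rewrite x_sub. apply norm_wsum. }
  assert (H2 := rsum_CS m (fun i => omega i n) a ltac:(intros; apply Hom01; auto)).
  rewrite Hsum in H2.
  assert (H3 : rsum m (fun i => omega i n * (a i * a i)) <=
     rsum m (fun i => nsq X (hsub (x n) z) * omega i n + (- c0) * (omega i n * (bb i n * bb i n)))).
  { apply rsum_le. intros i Hi. unfold a, bb. rewrite !hnorm_sq.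
    specialize (Hc0T i Hi (x n) z (Hz i Hi)). unfold nsq in Hc0T.
    assert (0 <= omega i n) by (apply Hom01; auto).
    assert (omega i n * hinner X (hsub (T i (x n)) z) (hsub (T i (x n)) z) <=
      omega i n * (hinner X (hsub (x n) z) (hsub (x n) z) -
                 c0 * hinner X (hsub (x n) (T i (x n))) (hsub (x n) (T i (x n)))))
      by (apply Rmult_le_compat_l; auto).
    unfold nsq. lra. }
  rewrite rsum_lin, Hsum in H3. fold (SS n) in H3.
  pose proof (hnorm_nonneg X (hsub (x (S n)) z)).
  assert (hnorm (hsub (x (S n)) z) * hnorm (hsub (x (S n)) z) <=
     rsum m (fun i => omega i n * a i) * rsum m (fun i => omega i n * a i))
    by (apply Rmult_le_compat; auto).
  rewrite hnorm_sq in H0. unfold nsq in *. lra.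
Qed.

Lemma step_dist n : hnorm (hsub (x (S n)) (x n)) <= DD n.
Proof.
  rewrite x_sub. eapply Rle_trans; [apply norm_wsum|]. apply rsum_le. intros i Hi.
  unfold bb. rewrite hnorm_sub_sym. lra.
Qed.

Lemma DD_sq n : DD n * DD n <= SS n.
Proof.
  pose proof (rsum_CS m (fun i => omega i n) (fun i => bb i n) ltac:(intros; apply Hom01; auto)).
  rewrite Hsum in H. unfold DD, SS. lra.
Qed.

Lemma e_mono z n : ZZ z -> nsq X (hsub (x (S n)) z) <= nsq X (hsub (x n) z).
Proof.
  intros Hz. pose proof (fejer z n Hz). pose proof (SS_nonneg n).
  assert (0 <= c0 * SS n) by (apply Rmult_le_pos; lra). lra.
Qed.

Lemma norm_mono z n k : ZZ z -> hnorm (hsub (x (k + n)) z) <= hnorm (hsub (x n) z).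
Proof.
  intros Hz. induction k; [simpl; lra|].
  eapply Rle_trans; [|exact IHk]. apply nsq_hnorm_le. simpl. apply e_mono; auto.
Qed.

Lemma telesc z n p : ZZ z ->
  c0 * rsum p (fun k => SS (n + k)) <= nsq X (hsub (x n) z) - nsq X (hsub (x (n + p)) z).
Proof.
  intros Hz. rewrite <- rsum_scal.
  eapply Rle_trans.
  - apply (rsum_le p _ (fun k => nsq X (hsub (x (n + k)) z) - nsq X (hsub (x (n + S k)) z))).
    intros k _. rewrite Nat.add_succ_r. pose proof (fejer z (n + k) Hz). lra.
  - rewrite (rsum_telescope p (fun k => nsq X (hsub (x (n + k)) z))).
    rewrite Nat.add_0_r. lra.
Qed.

Lemma move n k : hnorm (hsub (x (n + k)) (x n)) <= rsum k (fun j => DD (n + j)).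
Proof.
  induction k.
  - rewrite Nat.add_0_r, hnorm_self. simpl; lra.
  - cbn [rsum]. rewrite Nat.add_succ_r.
    eapply Rle_trans; [apply (hnorm_tri_sub X _ (x (n + k)))|].
    pose proof (step_dist (n + k)). lra.
Qed.

End Main.


Lemma pow_le_one q n : 0 <= q <= 1 -> q ^ n <= 1.
Proof.
  intros H. induction n; simpl; [lra|].
  assert (0 <= q ^ n) by (apply pow_le; lra).
  assert (q * q ^ n <= 1 * 1) by (apply Rmult_le_compat; lra). lra.
Qed.

Lemma sq_le a b : 0 <= a -> 0 <= b -> a * a <= b * b -> a <= b.
Proof.
  intros Ha Hb H. destruct (Rle_dec a b) as [|Hn]; [assumption|]. exfalso.
  assert (b * b < a * a) by (apply Rmult_le_0_lt_compat; lra). lra.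
Qed.

Lemma kappa_family (X : Hilbert) (m : nat) (T : nat -> X -> X) rho :
  (forall i, (i < m)%nat -> bdd_lin_regular_op (T i)) -> rho > 0 ->
  exists kappa, kappa >= 0 /\ forall i, (i < m)%nat -> forall y, hnorm y <= rho ->
    dist (Fix (T i)) y <= kappa * hnorm (hsub y (T i y)).
Proof.
  intros H Hr. induction m as [|k IH].
  - exists 0. split; [lra|]. intros; lia.
  - destruct IH as [k1 [Hk1 H1]]; [intros; apply H; lia|].
    destruct (H k (Nat.lt_succ_diag_r k)) as [_ H2].
    destruct (H2 rho Hr) as [k2 [Hk2 H2']].
    exists (Rmax k1 k2). split; [apply Rle_ge; eapply Rle_trans; [|apply Rmax_l]; lra|].
    intros i Hi y Hy. pose proof (hnorm_nonneg X (hsub y (T i y))).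
    destruct (Nat.eq_dec i k) as [->|Hne].
    + eapply Rle_trans; [apply H2'; auto|]. apply Rmult_le_compat_r; [lra|apply Rmax_r].
    + eapply Rle_trans; [apply H1; auto; lia|]. apply Rmult_le_compat_r; [lra|apply Rmax_l].
Qed.

Theorem theorem6p1 (X : Hilbert) (m : nat) (T : nat -> X -> X)
  (omega : nat -> nat -> R) (x : nat -> X)
  (HT_avg : forall i, (i < m)%nat -> averaged_nonexpansive (T i))
  (HT_reg : forall i, (i < m)%nat -> bdd_lin_regular_op (T i))
  (HZ : exists z, inter_fam m (fun i => Fix (T i)) z)
  (Hfam : bdd_lin_regular_fam m (fun i => Fix (T i)))
  (Hom01 : forall i n, (i < m)%nat -> 0 <= omega i n <= 1)
  (Hsum : forall n, rsum m (fun i => omega i n) = 1)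
  (Hplus : exists delta, delta > 0 /\
     forall n i, (i < m)%nat -> omega i n > 0 -> delta <= omega i n)
  (Hcover : exists p : nat, (p >= 1)%nat /\
     forall n i, (i < m)%nat -> exists k, (k < p)%nat /\ omega i (n + k)%nat > 0)
  (Hx : forall n, x (S n) = vsum m (fun i => hscal X (omega i n) (T i (x n)))) :
  exists z, inter_fam m (fun i => Fix (T i)) z /\
    exists c q, c >= 0 /\ 0 <= q < 1 /\
      forall n, hnorm (hsub (x n) z) <= c * q ^ n.
Proof.
  destruct (avg_family X m T HT_avg) as [c0 [Hc0 Hc0T]].
  destruct HZ as [z0 Hz0].
  destruct Hplus as [delta [Hdel Hdelta]].
  destruct Hcover as [p [Hp Hcov]].
  pose proof (norm_mono X m T omega x Hom01 Hsum Hx c0 Hc0 Hc0T) as NM.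
  pose proof (telesc X m T omega x Hom01 Hsum Hx c0 Hc0T) as TL.
  pose proof (move X m T omega x Hom01 Hsum Hx) as MV.
  pose proof (DD_sq X m T omega x Hom01 Hsum) as DSQ.
  pose proof (DD_nonneg X m T omega x Hom01) as DNN.
  pose proof (SS_nonneg X m T omega x Hom01) as SNN.
  pose proof (e_mono X m T omega x Hom01 Hsum Hx c0 Hc0 Hc0T) as EM.
  set (Z := inter_fam m (fun i => Fix (T i))) in *.
  assert (HZZ : forall z, Z z -> ZZ X m T z) by (intros; assumption).
  assert (HZne : exists z, Z z) by eauto.
  set (rho := hnorm (hsub (x 0%nat) z0) + hnorm z0 + 1).
  assert (Hrho : rho > 0).
  { unfold rho. pose proof (hnorm_nonneg X (hsub (x 0%nat) z0)). pose proof (hnorm_nonneg X z0). lra. }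
  assert (Hbound : forall n, hnorm (x n) <= rho).
  { intros n. pose proof (hnorm_le_sub X (x n) z0).
    pose proof (NM z0 0%nat n (HZZ z0 Hz0)).
    rewrite Nat.add_0_r in H0. unfold rho. lra. }
  destruct (kappa_family X m T rho HT_reg Hrho) as [kappa [Hka Hkap]].
  destruct (Hfam rho Hrho) as [mu [Hmu Hmuf]].
  set (d := fun n => dist Z (x n)).
  assert (Hd0 : forall n, 0 <= d n) by (intros; apply dist_nonneg; auto).
  set (DD' := DD X m T omega x).
  set (P := fun n => rsum p (fun k => DD' (n + k)%nat)).
  assert (HDD : forall j, 0 <= DD' j) by (intros; apply DNN).
  assert (HP : forall n, 0 <= P n) by (intros; apply rsum_nonneg; auto).
  set (M := mu * (1 + kappa / delta)).
  assert (HM : 0 <= M).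
  { unfold M. apply Rmult_le_pos; [lra|]. assert (0 <= kappa / delta) by (unfold Rdiv; apply Rmult_le_pos; [lra|apply Rlt_le, Rinv_0_lt_compat; lra]). lra. }
  assert (KB : forall n, d n <= M * P n).
  { intros n. unfold d. eapply Rle_trans; [apply Hmuf, Hbound|].
    unfold M. rewrite Rmult_assoc. apply Rmult_le_compat_l; [lra|].
    apply max_fin_le.
    { apply Rmult_le_pos; [|apply HP]. assert (0 <= kappa / delta) by (unfold Rdiv; apply Rmult_le_pos; [lra|apply Rlt_le, Rinv_0_lt_compat; lra]). lra. }
    intros i Hi. destruct (Hcov n i Hi) as [k [Hk Hpos]].
    assert (HZi : exists c, Fix (T i) c) by (exists z0; apply Hz0; auto).
    pose proof (dist_lip X (Fix (T i)) (x (n + k)%nat) (x n) HZi) as Hl.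
    rewrite hnorm_sub_sym in Hl.
    pose proof (MV n k) as Hmv.
    assert (rsum k (fun j => DD X m T omega x (n + j)) <= P n).
    { apply rsum_mono_len; [lia|]. intros; apply HDD. }
    pose proof (Hkap i Hi (x (n + k)%nat) (Hbound _)) as Hkk.
    fold (bb X T x i (n + k)) in Hkk.
    pose proof (bb_nonneg X T x i (n + k)) as Hbb.
    assert (Hw : omega i (n + k)%nat * bb X T x i (n + k) <= P n).
    { eapply Rle_trans; [|apply (rsum_term p (fun k => DD' (n + k)%nat) k); auto].
      unfold DD', DD. apply (rsum_term m (fun i0 => omega i0 (n + k)%nat * bb X T x i0 (n + k))); auto.
      intros. apply Rmult_le_pos; [apply Hom01; auto|apply bb_nonneg]. }
    assert (Hdo := Hdelta (n + k)%nat i Hi Hpos).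
    assert (Hb2 : bb X T x i (n + k) <= P n / delta).
    { apply (Rmult_le_reg_l delta); [lra|].
      replace (delta * (P n / delta)) with (P n) by (field; lra).
      assert (delta * bb X T x i (n + k) <= omega i (n + k)%nat * bb X T x i (n + k))
        by (apply Rmult_le_compat_r; lra). lra. }
    assert (kappa * bb X T x i (n + k) <= kappa * (P n / delta)) by (apply Rmult_le_compat_l; lra).
    replace ((1 + kappa / delta) * P n) with (P n + kappa * (P n / delta)) by (field; lra).
    lra. }

  set (SS' := SS X m T omega x).
  set (K := M * M * INR p * / c0 + 1).
  assert (HpR : 1 <= INR p) by (apply (le_INR 1); lia).
  assert (HK1 : 1 <= K).
  { unfold K. assert (0 <= M * M * INR p * / c0).
    { apply Rmult_le_pos; [apply Rmult_le_pos; [apply sq_nonneg|lra]|apply Rlt_le, Rinv_0_lt_compat; lra]. }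
    lra. }
  assert (Kz : forall n z, Z z -> d n * d n <=
      K * (nsq X (hsub (x n) z) - nsq X (hsub (x (n + p)%nat) z))).
  { intros n z Hz.
    pose proof (TL z n p (HZZ z Hz)) as Ht.
    fold SS' in Ht.
    set (R0 := rsum p (fun k => SS' (n + k)%nat)) in *.
    set (Dl := nsq X (hsub (x n) z) - nsq X (hsub (x (n + p)%nat) z)) in *.
    assert (HR0 : 0 <= R0) by (apply rsum_nonneg; intros; apply SNN).
    assert (HDl : 0 <= Dl) by (assert (0 <= c0 * R0) by (apply Rmult_le_pos; lra); lra).
    assert (HCS : P n * P n <= INR p * R0).
    { pose proof (rsum_CS p (fun _ => 1) (fun k => DD' (n + k)%nat) (fun _ _ => Rle_0_1)) as H.
      rewrite rsum_const, Rmult_1_r in H.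
      rewrite (rsum_ext p (fun i => 1 * DD' (n + i)%nat) (fun i => DD' (n + i)%nat)) in H
        by (intros; ring).
      rewrite (rsum_ext p (fun i => 1 * (DD' (n + i)%nat * DD' (n + i)%nat))
                 (fun i => DD' (n + i)%nat * DD' (n + i)%nat)) in H by (intros; ring).
      eapply Rle_trans; [exact H|]. apply Rmult_le_compat_l; [lra|].
      apply rsum_le. intros. apply DSQ. }
    assert (HR1 : R0 <= / c0 * Dl).
    { replace R0 with (/ c0 * (c0 * R0)) by (field; lra).
      apply Rmult_le_compat_l; [apply Rlt_le, Rinv_0_lt_compat; lra|lra]. }
    assert (Hd2 : d n * d n <= (M * P n) * (M * P n))
      by (apply Rmult_le_compat; auto; apply KB).
    assert (M * M * (P n * P n) <= M * M * (INR p * R0))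
      by (apply Rmult_le_compat_l; [apply sq_nonneg|lra]).
    assert (M * M * INR p * R0 <= M * M * INR p * (/ c0 * Dl))
      by (apply Rmult_le_compat_l; [apply Rmult_le_pos; [apply sq_nonneg|lra]|lra]).
    unfold K. clearbody Dl R0. nra. }
  assert (Step : forall n, d (n + p)%nat * d (n + p)%nat <= d n * d n - d n * d n / K).
  { intros n. apply eps_sq_lemma; [apply Hd0|]. intros eps Heps.
    destruct (dist_approx X Z (x n) eps HZne Heps) as [z [Hz Hzn]].
    fold (d n) in Hzn.
    pose proof (Kz n z Hz) as Hk.
    assert (H1 : nsq X (hsub (x n) z) <= (d n + eps) * (d n + eps)).
    { unfold nsq. rewrite <- hnorm_sq. pose proof (hnorm_nonneg X (hsub (x n) z)).
      apply Rmult_le_compat; lra. }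
    assert (H2 : d (n + p)%nat * d (n + p)%nat <= nsq X (hsub (x (n + p)%nat) z)).
    { unfold nsq. rewrite <- hnorm_sq. pose proof (dist_le X Z (x (n + p)%nat) z Hz).
      apply Rmult_le_compat; auto. }
    assert (H3 : d n * d n / K <= nsq X (hsub (x n) z) - nsq X (hsub (x (n + p)%nat) z)).
    { unfold Rdiv. rewrite Rmult_comm.
      set (Dl := nsq X (hsub (x n) z) - nsq X (hsub (x (n + p)%nat) z)) in *.
      replace Dl with (/ K * (K * Dl)) by (field; lra).
      apply Rmult_le_compat_l; [apply Rlt_le, Rinv_0_lt_compat; lra|lra]. }
    lra. }
  set (t := / (4 * INR p * K)).
  assert (Ht0 : 0 < t) by (unfold t; apply Rinv_0_lt_compat; nra).
  assert (Ht1 : t <= 1).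
  { unfold t. rewrite <- Rinv_1. apply Rinv_le_contravar; [lra|nra]. }
  set (q := 1 - t).
  assert (Hq : 0 <= q < 1) by (unfold q; lra).
  assert (Hq2 : 1 - / K <= q ^ p * q ^ p).
  { rewrite <- pow_add. pose proof (bernoulli t (p + p) ltac:(lra)) as Hb.
    rewrite plus_INR in Hb. fold q in Hb.
    assert (E : (INR p + INR p) * t = / (2 * K)) by (unfold t; field; lra).
    rewrite E in Hb.
    assert (/ (2 * K) <= / K) by (apply Rinv_le_contravar; lra). lra. }
  assert (Hqp : 0 < q ^ p).
  { apply pow_lt. unfold q. assert (t <= / 4).
    { unfold t. apply Rinv_le_contravar; [lra|nra]. }
    lra. }
  set (C := d 0%nat / q ^ p).
  assert (HC : 0 <= C) by (unfold C, Rdiv; apply Rmult_le_pos; [apply Hd0|apply Rlt_le, Rinv_0_lt_compat; lra]).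
  assert (Decay : forall n, d n <= C * q ^ n).
  { intros n. induction n as [n IH] using lt_wf_ind.
    destruct (lt_dec n p) as [Hlt|Hge].
    - assert (d n <= d 0%nat).
      { apply dist_glb; auto. intros z Hz. eapply Rle_trans; [apply dist_le, Hz|].
        pose proof (NM z 0%nat n (HZZ z Hz)) as H. rewrite Nat.add_0_r in H. exact H. }
      assert (E : d 0%nat = C * q ^ n * q ^ (p - n)).
      { unfold C. rewrite Rmult_assoc, <- pow_add. replace (n + (p - n))%nat with p by lia.
        field. lra. }
      assert (q ^ (p - n) <= 1) by (apply pow_le_one; lra).
      assert (0 <= C * q ^ n) by (apply Rmult_le_pos; [lra|apply pow_le; lra]).
      assert (C * q ^ n * q ^ (p - n) <= C * q ^ n * 1) by (apply Rmult_le_compat_l; lra).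
      lra.
    - pose proof (IH (n - p)%nat ltac:(lia)) as Hprev.
      pose proof (Step (n - p)%nat) as Hs. replace (n - p + p)%nat with n in Hs by lia.
      assert (E : q ^ n = q ^ (n - p) * q ^ p).
      { rewrite <- pow_add. f_equal. lia. }
      apply sq_le; [apply Hd0|apply Rmult_le_pos; [lra|apply pow_le; lra]|].
      rewrite E.
      assert (Hr : d n * d n <= d (n - p)%nat * d (n - p)%nat * (1 - / K)).
      { replace (d (n - p)%nat * d (n - p)%nat * (1 - / K)) with
          (d (n - p)%nat * d (n - p)%nat - d (n - p)%nat * d (n - p)%nat / K) by (field; lra).
        exact Hs. }
      assert (d (n - p)%nat * d (n - p)%nat <= (C * q ^ (n - p)) * (C * q ^ (n - p)))
        by (apply Rmult_le_compat; auto).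
      assert (0 <= 1 - / K).
      { assert (/ K <= 1) by (rewrite <- Rinv_1; apply Rinv_le_contravar; lra). lra. }
      assert (d (n - p)%nat * d (n - p)%nat * (1 - / K) <=
              (C * q ^ (n - p)) * (C * q ^ (n - p)) * (q ^ p * q ^ p)).
      { apply Rmult_le_compat; auto. apply Rmult_le_pos; apply Hd0. }
      nra. }
  assert (CA : forall n k, hnorm (hsub (x (k + n)%nat) (x n)) <= 2 * C * q ^ n).
  { intros n k.
    assert (/ 2 * hnorm (hsub (x (k + n)%nat) (x n)) <= d n).
    { apply dist_glb; auto. intros z Hz.
      pose proof (hnorm_tri_sub X (x (k + n)%nat) z (x n)).
      pose proof (NM z n k (HZZ z Hz)). rewrite (hnorm_sub_sym X z (x n)) in H. lra. }
    pose proof (Decay n). lra. }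
  assert (Hcau : forall eps, eps > 0 -> exists N, forall a b, (a >= N)%nat -> (b >= N)%nat ->
      hnorm (hsub (x a) (x b)) < eps).
  { intros eps Heps.
    destruct (pow_lt_1_zero q ltac:(rewrite Rabs_right; lra) (eps / (2 * C + 1))
       ltac:(apply Rdiv_lt_0_compat; lra)) as [N HN].
    exists N.
    assert (Hgen : forall a b, (b <= a)%nat -> (b >= N)%nat -> hnorm (hsub (x a) (x b)) < eps).
    { intros a b Hab Hb. pose proof (CA b (a - b)%nat) as H.
      replace (a - b + b)%nat with a in H by lia.
      specialize (HN b Hb). rewrite Rabs_right in HN by (apply Rle_ge, pow_le; lra).
      assert (2 * C * q ^ b <= 2 * C * (eps / (2 * C + 1)))
        by (apply Rmult_le_compat_l; lra).
      assert (2 * C * (eps / (2 * C + 1)) < eps).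
      { apply (Rmult_lt_reg_r (2 * C + 1)); [lra|].
        replace (2 * C * (eps / (2 * C + 1)) * (2 * C + 1)) with (2 * C * eps) by (field; lra).
        nra. }
      lra. }
    intros a b Ha Hb. destruct (le_lt_dec b a).
    - apply Hgen; lia.
    - rewrite hnorm_sub_sym. apply Hgen; lia. }
  destruct (hcomplete X x Hcau) as [l Hl].
  assert (Hl' : forall eps, eps > 0 -> exists N, forall n, (n >= N)%nat ->
      hnorm (hsub (x n) l) < eps) by exact Hl.
  assert (Lim : forall n, hnorm (hsub (x n) l) <= 2 * C * q ^ n).
  { intros n. apply eps_lin_lemma. intros eps Heps.
    destruct (Hl' eps Heps) as [N HN]. specialize (HN (Nat.max n N) ltac:(lia)).
    pose proof (hnorm_tri_sub X (x n) (x (Nat.max n N)) l).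
    pose proof (CA n (Nat.max n N - n)%nat) as H1.
    replace (Nat.max n N - n + n)%nat with (Nat.max n N) in H1 by lia.
    rewrite hnorm_sub_sym in H1. lra. }
  assert (Zl : Z l).
  { intros i Hi. unfold Fix. apply hnorm_eq0.
    assert (Hz2 : forall z, Z z -> hnorm (hsub (T i l) l) <= 2 * hnorm (hsub l z)).
    { intros z Hz. pose proof (Hc0T i Hi l z (Hz i Hi)) as H.
      pose proof (nsq_nonneg X (hsub l (T i l))).
      assert (c0 * nsq X (hsub l (T i l)) >= 0) by (apply Rle_ge, Rmult_le_pos; lra).
      assert (hnorm (hsub (T i l) z) <= hnorm (hsub l z)) by (apply nsq_hnorm_le; lra).
      pose proof (hnorm_tri_sub X (T i l) z l). rewrite (hnorm_sub_sym X z l) in H3. lra. }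
    assert (Hdl : forall n, / 2 * hnorm (hsub (T i l) l) <= 3 * C * q ^ n).
    { intros n. eapply Rle_trans.
      - apply (dist_glb X Z l); auto. intros z Hz. pose proof (Hz2 z Hz). lra.
      - eapply Rle_trans; [apply (dist_lip X Z (x n) l HZne)|].
        rewrite hnorm_sub_sym. pose proof (Lim n). pose proof (Decay n). fold (d n). lra. }
    apply Rle_antisym; [|apply hnorm_nonneg].
    replace 0 with (0 + 0) by ring. apply eps_lin_lemma. intros eps Heps. rewrite Rplus_0_l.
    destruct (pow_lt_1_zero q ltac:(rewrite Rabs_right; lra) (eps / (6 * C + 1))
       ltac:(apply Rdiv_lt_0_compat; lra)) as [N HN].
    specialize (HN N (Nat.le_refl N)). rewrite Rabs_right in HN by (apply Rle_ge, pow_le; lra).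
    pose proof (Hdl N).
    assert (6 * C * q ^ N <= 6 * C * (eps / (6 * C + 1))) by (apply Rmult_le_compat_l; lra).
    assert (6 * C * (eps / (6 * C + 1)) <= eps).
    { apply (Rmult_le_reg_r (6 * C + 1)); [lra|].
      replace (6 * C * (eps / (6 * C + 1)) * (6 * C + 1)) with (6 * C * eps) by (field; lra).
      nra. }
    lra. }
  exists l. split; [exact Zl|]. exists (2 * C), q. split; [lra|]. split; [lra|]. exact Lim.
Qed.
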